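(* Let $R$ be a unital ring, and let $S\subseteq R$ be a subring with $1\in S$ such that $S$ is generated by its commutators (so that $\xi(S)$ is defined). Then $\xi(R)\leq 15\,\xi(S)^3$; that is, every element of $R$ is a sum of $15\,\xi(S)^3$ elements of the form $[b,c][d,e]$ with $b,c,d,e\in R$.
   Context: $[x,y]=xy-yx$. For a unital ring $T$ generated by its commutators (as an ideal, equivalently as a ring), $\xi(T)$ is the minimal $N\in\mathbb{N}$ such that every element of $T$ is a sum of $N$ elements of the form $[b,c][d,e]$ with $b,c,d,e\in T$. *)

(* Defs.v *)
From mathcomp Require Import all_boot all_algebra.
Set Implicit Arguments. Unset Strict Implicit. Unset Printing Implicit Defensive.
Import GRing.Theory.
Local Open Scope ring_scope.

Definition comm (R : pzRingType) (x y : R) : R := x * y - y * x.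

Definition sum_comm_prods (R : pzRingType) (T : {pred R}) (N : nat) (x : R)
  : Prop :=
  exists b c d e : 'I_N -> R,
    (forall i, [/\ b i \in T, c i \in T, d i \in T & e i \in T]) /\
    x = \sum_(i < N) comm (b i) (c i) * comm (d i) (e i).

Definition xi_eq (R : pzRingType) (T : {pred R}) (N : nat) : Prop :=
  (forall x, x \in T -> sum_comm_prods T N x) /\
  (forall M, (forall x, x \in T -> sum_comm_prods T M x) -> (N <= M)%N).

(* Main.v *)
Require Import Defs.
From mathcomp Require Import all_boot all_algebra.
From mathcomp Require Import zify.
Set Implicit Arguments. Unset Strict Implicit. Unset Printing Implicit Defensive.
Import GRing.Theory.
Local Open Scope ring_scope.

Section Helpers.
Variable R : pzRingType.

Definition cc (t : (R * R) * (R * R)) : R := comm t.1.1 t.1.2 * comm t.2.1 t.2.2.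

Definition P' (m : nat) (x : R) : Prop :=
  exists s : seq ((R * R) * (R * R)), size s = m /\ x = \sum_(t <- s) cc t.

Lemma commN (x y : R) : comm x y = - comm y x.
Proof. by rewrite /comm opprB. Qed.

Lemma commMr (x y z : R) : comm x (y * z) = comm x y * z + y * comm x z.
Proof. by rewrite /comm mulrBl mulrBr !mulrA addrA subrK. Qed.

Lemma commMl (x y z : R) : comm (x * y) z = x * comm y z + comm x z * y.
Proof. by rewrite /comm mulrBl mulrBr !mulrA addrA subrK. Qed.

Lemma commNl (x y : R) : comm (- x) y = - comm x y.
Proof. by rewrite /comm mulNr mulrN opprK opprB addrC. Qed.

Lemma IF (P b Z : R) :
  comm P b * Z = - (comm Z b * P) + comm Z (b * P) - comm (b * Z) P.
Proof.
rewrite commMr commMl addrA addNr add0r opprD addrA subrr add0r.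
by rewrite (commN b P) mulNr opprK.
Qed.

Lemma swapc (P W : R) : P * W = W * P - comm W P.
Proof. by rewrite /comm opprB addrC subrK. Qed.

Lemma P'0 : P' 0 0.
Proof. by exists [::]; rewrite big_nil. Qed.

Lemma P'1 (b c d e : R) : P' 1 (comm b c * comm d e).
Proof. by exists [:: ((b, c), (d, e))]; rewrite big_seq1. Qed.

Lemma P'add m n x y : P' m x -> P' n y -> P' (m + n)%N (x + y).
Proof.
move=> [s [<- ->]] [s' [<- ->]]; exists (s ++ s').
by rewrite size_cat big_cat.
Qed.

Lemma P'opp m x : P' m x -> P' m (- x).
Proof.
move=> [s [<- ->]]; exists (map (fun t => ((- t.1.1, t.1.2), t.2)) s).
rewrite size_map big_map -sumrN; split => //.
by apply: eq_bigr => t _; rewrite /cc /= commNl mulNr.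
Qed.

Lemma P'sub m n x y : P' m x -> P' n y -> P' (m + n)%N (x - y).
Proof. by move=> Hx Hy; exact: (P'add Hx (P'opp Hy)). Qed.

Lemma P'zero k : P' k 0.
Proof.
elim: k => [|k IH]; first exact: P'0.
have := P'add (@P'1 0 0 0 0) IH.
by rewrite /comm !mulr0 subr0 mul0r add0r add1n.
Qed.

Lemma P'mono m n x : (m <= n)%N -> P' m x -> P' n x.
Proof.
move=> le H; rewrite -(subnKC le) -[x]addr0.
exact: P'add H (P'zero _).
Qed.

Lemma P'sum m n (F : 'I_n -> R) :
  (forall i, P' m (F i)) -> P' (n * m)%N (\sum_(i < n) F i).
Proof.
elim: n F => [|n IH] F HF; first by rewrite big_ord0 mul0n; exact: P'0.
rewrite big_ord_recr mulSnr; apply: P'add; last exact: HF.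
by apply: IH => i; exact: HF.
Qed.

Lemma P'_scp m x : P' m x -> sum_comm_prods (predT : {pred R}) m x.
Proof.
move=> [s [<- ->]].
pose x0 : (R * R) * (R * R) := ((0, 0), (0, 0)).
exists (fun i => (nth x0 s i).1.1), (fun i => (nth x0 s i).1.2),
       (fun i => (nth x0 s i).2.1), (fun i => (nth x0 s i).2.2).
split; first by move=> i; split.
by rewrite (big_nth x0) big_mkord.
Qed.

End Helpers.

Theorem proposition5p12 (R : pzRingType) (S : {pred R})
  (S1 : 1 \in S)
  (SB : forall x y, x \in S -> y \in S -> x - y \in S)
  (SM : forall x y, x \in S -> y \in S -> x * y \in S)
  (N : nat) (hxiS : xi_eq S N) :
  forall x : R, sum_comm_prods (predT : {pred R}) (15 * N ^ 3)%N x.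
Proof.
case: hxiS => Hrep _.
have commS : forall p q, p \in S -> q \in S -> comm p q \in S.
  by move=> p q Hp Hq; apply: SB; apply: SM.
have L1 : forall s Z, s \in S -> P' (N * 2) (comm Z s).
  move=> s Z Hs; have [b [c [d [e [Hm ->]]]]] := Hrep s Hs.
  have -> : comm Z (\sum_(i < N) comm (b i) (c i) * comm (d i) (e i)) =
            \sum_(i < N) comm Z (comm (b i) (c i) * comm (d i) (e i)).
    by rewrite /comm mulr_sumr mulr_suml -sumrB.
  apply: P'sum => i; rewrite commMr.
  exact: (P'add (@P'1 _ _ _ _ _) (@P'1 _ _ _ _ _)).
have LA : forall p q b Z, p \in S -> q \in S -> b \in S ->
    P' (1 + N * 2 + N * 2) (comm (comm p q) b * Z).
  move=> p q b Z Hp Hq Hb; rewrite IF.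
  apply: P'sub; last by apply: L1; exact: commS.
  apply: P'add; first by apply: P'opp; exact: P'1.
  by apply: L1; apply: SM => //; exact: commS.
have LB : forall p q r t b y, p \in S -> q \in S -> r \in S -> t \in S ->
    b \in S ->
    P' ((1 + N * 2 + N * 2 + N * 2) + (1 + N * 2 + N * 2))
       (comm (comm p q * comm r t) b * y).
  move=> p q r t b y Hp Hq Hr Ht Hb.
  rewrite commMl mulrDl; apply: P'add.
    rewrite -mulrA swapc -mulrA.
    apply: P'sub; first exact: LA.
    by apply: L1; exact: commS.
  by rewrite -mulrA; exact: LA.
have LC : forall a b y, a \in S -> b \in S ->
    P' (N * ((1 + N * 2 + N * 2 + N * 2) + (1 + N * 2 + N * 2)))
       (comm a b * y).
  move=> a b y Ha Hb; have [p [q [r [t [Hm ->]]]]] := Hrep a Ha.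
  have -> : comm (\sum_(i < N) comm (p i) (q i) * comm (r i) (t i)) b * y =
     \sum_(i < N) (comm (comm (p i) (q i) * comm (r i) (t i)) b * y).
    by rewrite /comm mulr_suml mulr_sumr -sumrB mulr_suml.
  apply: P'sum => i; case: (Hm i) => Hp Hq Hr Ht.
  exact: LB.
move=> x; apply: P'_scp.
have [a [b [c [d [Hm H1]]]]] := Hrep 1 S1.
have -> : x = \sum_(i < N) comm (a i) (b i) * (comm (c i) (d i) * x).
  rewrite -[LHS]mul1r {1}H1 mulr_suml.
  by apply: eq_bigr => i _; rewrite mulrA.
apply: P'mono; last first.
  apply: P'sum => i; case: (Hm i) => Ha Hb Hc Hd; exact: LC.
rewrite !expnS expn0; nia.
Qed.
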